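(* For every $n\ge 0$, let $K_n$ be any virtual knot diagram whose arrow diagram is ${\mathcal A}_n$. Then in the quandle of $K_n$ all generators are equal, so the quandle is generated by a single element, and the fundamental group of $K_n$ (defined via the Wirtinger-type presentation) is infinite cyclic, i.e. isomorphic to that of the unknot.
   Context: A virtual knot diagram is a generic immersion of an oriented circle in the plane in which each double point is a real crossing (with over/under information) or a virtual crossing. Its arrow diagram is the counterclockwise-oriented parametrizing circle with one arrow per real crossing joining its two preimages, pointing from the overcrossing preimage to the undercrossing preimage; an endpoint has sign $+$ if, viewing its strand in the direction of orientation, the other strand passes from right to left, and $-$ otherwise. The arrow diagram ${\mathcal A}_n$ ($n\ge0$) has arrows $x,y_1,\dots,y_n$ with endpoints in counterclockwise order $X^+,Y_1^+,\dots,Y_n^+,X^-,Y_n^-,\dots,Y_1^-$; $x$ points from $X^+$ to $X^-$; $y_j$ points from $Y_j^-$ to $Y_j^+$ if $n-j$ is even and from $Y_j^+$ to $Y_j^-$ if $n-j$ is odd. Quandle of a diagram: one generator per bridge arc (arc running between undercrossings at real crossings; labels pass unchanged through virtual crossings), and at each real crossing with overcrossing label $a$, incoming undercrossing label $b$, the outgoing undercrossing label is $c=b\triangleright a$ or $c=b\triangleleft a$ depending on the crossing sign, in the free quandle (a quandle satisfies $a\triangleright a=a\triangleleft a=a$, $(a\triangleleft b)\triangleright b=a=(a\triangleright b)\triangleleft b$, unique solvability, and self-distributivity). The fundamental group is the group with one generator per bridge arc and, at each real crossing, the relation $c=a^{\epsilon}ba^{-\epsilon}$ with $\epsilon=\pm1$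 the crossing sign. *)

(* Defs.v *)
From mathcomp Require Import all_boot all_order all_algebra.
Set Implicit Arguments. Unset Strict Implicit. Unset Printing Implicit Defensive.

(* An arrow diagram is the list of arrow endpoints met when running     *)
(* once around the counterclockwise-oriented parametrizing circle       *)
(* (i.e. along the knot orientation), starting at some base point.      *)
(* An endpoint is a triple (arrow, is_head, sgn):                        *)
(*   arrow   : nat  -- the name of the arrow (= real crossing);         *)
(*   is_head : bool -- true iff it is the head of the arrow, i.e. the   *)
(*                     undercrossing preimage (false = tail = over);     *)
(*   sgn     : bool -- true iff the endpoint sign is +.                  *)
Definition endpoint := (nat * bool * bool)%type.
Definition ep_arrow (e : endpoint) : nat := e.1.1.
Definition ep_head (e : endpoint) : bool := e.1.2.
Definition ep_sign (e : endpoint) : bool := e.2.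

Definition e0 : endpoint := (0%N, false, false).

Definition heads (D : seq endpoint) : seq nat :=
  [seq p <- iota 0 (size D) | ep_head (nth e0 D p)].

(* Bridge arcs are named by the head position at which they start (the
   outgoing undercrossing strand); an arc runs from one head to the next.
   [arc_of D k] is the bridge arc containing position k. *)
Definition arc_of (D : seq endpoint) (k : nat) : nat :=
  match [seq p <- heads D | p <= k] with
  | [::] => last 0 (heads D)
  | s => last 0 s
  end.

Definition tail_pos (D : seq endpoint) (i : nat) : nat :=
  find (fun e : endpoint => (ep_arrow e == i) && ~~ ep_head e) D.

(* sign of the real crossing of arrow i: +1 iff viewing along the over
   strand the under strand passes from right to left, i.e. iff the tail
   endpoint has sign + *)
Definition crossing_sign (D : seq endpoint) (i : nat) : bool :=
  ep_sign (nth e0 D (tail_pos D i)).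

(* One crossing relation per real crossing (one per head position p):
   (over label a, incoming under label b, outgoing under label c, sign). *)
Definition crossing_rel (D : seq endpoint) (p : nat) : nat * nat * nat * bool :=
  let i := ep_arrow (nth e0 D p) in
  (arc_of D (tail_pos D i), arc_of D ((p + size D).-1 %% size D), p,
   crossing_sign D i).

Definition crossing_rels (D : seq endpoint) := [seq crossing_rel D p | p <- heads D].

(* The knot quandle: free quandle on the bridge arcs modulo relations  *)
Inductive qterm : Type :=
| qvar of nat
| qR of qterm & qterm
| qL of qterm & qterm.

Fixpoint qterm_over (P : pred nat) (t : qterm) : bool :=
  match t with
  | qvar x => P x
  | qR a b => qterm_over P a && qterm_over P b
  | qL a b => qterm_over P a && qterm_over P b
  end.

Inductive qeq (rels : seq (nat * nat * nat * bool)) : qterm -> qterm -> Prop :=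
| qeq_refl t : qeq rels t t
| qeq_sym s t : qeq rels s t -> qeq rels t s
| qeq_trans s t u : qeq rels s t -> qeq rels t u -> qeq rels s u
| qeq_R a a' b b' : qeq rels a a' -> qeq rels b b' -> qeq rels (qR a b) (qR a' b')
| qeq_L a a' b b' : qeq rels a a' -> qeq rels b b' -> qeq rels (qL a b) (qL a' b')
| qeq_idR a : qeq rels (qR a a) a
| qeq_idL a : qeq rels (qL a a) a
| qeq_LR a b : qeq rels (qR (qL a b) b) a
| qeq_RL a b : qeq rels (qL (qR a b) b) a
| qeq_dist a b c : qeq rels (qR (qR a b) c) (qR (qR a c) (qR b c))
| qeq_rel a b c eps : (a, b, c, eps) \in rels ->
    qeq rels (qvar c) (if eps then qR (qvar b) (qvar a) else qL (qvar b) (qvar a)).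

Definition knot_qeq (D : seq endpoint) := qeq (crossing_rels D).

(* The fundamental group: free group on the bridge arcs modulo the      *)
(* relations c = a^eps b a^-eps.  Elements are words (letter, exponent  *)
(* sign) modulo the congruence generated by free reduction and the      *)
(* relators c^-1 a^eps b a^-eps.                                        *)
Definition letter := (nat * bool)%type.   (* (generator, true = +1) *)

Definition relator (r : nat * nat * nat * bool) : seq letter :=
  let: (a, b, c, eps) := r in [:: (c, false); (a, eps); (b, true); (a, ~~ eps)].

Inductive geq (rels : seq (nat * nat * nat * bool)) : seq letter -> seq letter -> Prop :=
| geq_refl w : geq rels w w
| geq_sym w w' : geq rels w w' -> geq rels w' w
| geq_trans w1 w2 w3 : geq rels w1 w2 -> geq rels w2 w3 -> geq rels w1 w3
| geq_free u v x b : geq rels (u ++ [:: (x, b); (x, ~~ b)] ++ v) (u ++ v)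
| geq_relator u v r : r \in rels -> geq rels (u ++ relator r ++ v) (u ++ v).

Definition knot_geq (D : seq endpoint) := geq (crossing_rels D).

(* The group <heads D | relations> is infinite cyclic: there is a group
   isomorphism from it onto (int, +), i.e. a map on words over the
   generators that is additive, surjective, and whose fibres are exactly
   the classes of the presenting congruence. *)
Definition group_infinite_cyclic (D : seq endpoint) : Prop :=
  exists phi : seq letter -> int,
    [/\ (forall u v, all (fun l : letter => l.1 \in heads D) u ->
                     all (fun l : letter => l.1 \in heads D) v ->
                     phi (u ++ v) = (phi u + phi v)%R),
        (forall u v, all (fun l : letter => l.1 \in heads D) u ->
                     all (fun l : letter => l.1 \in heads D) v ->
                     (knot_geq D u v <-> phi u = phi v)) &
        (forall z : int, exists2 u, all (fun l : letter => l.1 \in heads D) u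
                                    & phi u = z)].

(* The arrow diagram A_n: arrows x (named 0) and y_1..y_n (named j),   *)
(* endpoints X+, Y1+, ..., Yn+, X-, Yn-, ..., Y1-;  x : X+ -> X-;      *)
(* y_j : Yj- -> Yj+ if n-j even, Yj+ -> Yj- if n-j odd.                *)
Definition A_diag (n : nat) : seq endpoint :=
  [:: (0%N, false, true)] ++
  [seq (j, ~~ odd (n - j), true) | j <- iota 1 n] ++
  [:: (0%N, true, false)] ++
  [seq (j, odd (n - j), false) | j <- rev (iota 1 n)].

(* Main.v *)
Require Import Defs.
From mathcomp Require Import all_boot all_order all_algebra zify.
Set Implicit Arguments. Unset Strict Implicit.
Import GRing.Theory.
Local Notation geq := Defs.geq.


Lemma find_eq (T : Type) (P : pred T) x0 (s : seq T) k :
  k < size s -> P (nth x0 s k) -> (forall i, i < k -> ~~ P (nth x0 s i)) ->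
  find P s = k.
Proof.
elim: s k => [|x s IH] [|k] //= Hk Hp Hi.
- by rewrite Hp.
- have := Hi 0 isT; rewrite /= => /negbTE ->; congr S.
  by apply: IH => // i Hik; apply: (Hi i.+1).
Qed.

Definition hd (D : seq endpoint) p := ep_head (nth e0 D p).

Lemma arc_filter D k : k < size D ->
  [seq p <- heads D | p <= k] = [seq p <- iota 0 k.+1 | hd D p].
Proof.
move=> Hk; rewrite /heads -filter_predI.
have -> : size D = k.+1 + (size D - k.+1) by lia.
rewrite iotaD filter_cat.
have -> : [seq p <- iota (0 + k.+1) (size D - k.+1) | predI (fun p => p <= k) (fun p => ep_head (nth e0 D p)) p] = [::].
  rewrite (@eq_in_filter _ _ pred0); first by rewrite filter_pred0.
  by move=> x; rewrite mem_iota => H /=; apply/negbTE; apply/negP => /andP [H1 _]; move: H; lia.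
rewrite cats0; apply: eq_in_filter => x; rewrite mem_iota => H /=.
by have -> : x <= k by lia.
Qed.

Lemma arc_head D k : k < size D -> hd D k -> arc_of D k = k.
Proof.
move=> Hk Hh; rewrite /arc_of arc_filter // -addn1 iotaD filter_cat /= Hh.
by case: [seq _ <- _ | _] => [|x s] //=; rewrite last_cat.
Qed.

Lemma arc_nonhead D k : 0 < k < size D -> ~~ hd D k -> arc_of D k = arc_of D k.-1.
Proof.
move=> /andP [H0 Hk] Hh; rewrite /arc_of !arc_filter //; last by lia.
have -> : k.-1.+1 = k by lia.
by rewrite -addn1 iotaD filter_cat /= (negbTE Hh) cats0.
Qed.

Lemma arc_last D : 0 < size D -> arc_of D (size D).-1 = last 0 (heads D).
Proof.
move=> H; rewrite /arc_of arc_filter; last by lia.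
have -> : (size D).-1.+1 = size D by lia.
rewrite -/(heads D); by case: (heads D).
Qed.

Lemma arc_zero D : 0 < size D -> ~~ hd D 0 -> arc_of D 0 = last 0 (heads D).
Proof.
move=> H Hh; rewrite /arc_of arc_filter //=.
by rewrite (negbTE Hh).
Qed.

Lemma mem_heads D c : (c \in heads D) = (c < size D) && hd D c.
Proof. by rewrite /heads mem_filter mem_iota andbC. Qed.

Lemma rel_in D c : c \in heads D -> 0 < c ->
  (arc_of D (tail_pos D (ep_arrow (nth e0 D c))), arc_of D c.-1, c,
   crossing_sign D (ep_arrow (nth e0 D c))) \in crossing_rels D.
Proof.
move=> Hc H0.
have Hs : c < size D by move: Hc; rewrite mem_heads => /andP [].
have -> : c.-1 = (c + size D).-1 %% size D.
  have -> : (c + size D).-1 = c.-1 + size D by lia.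
  by rewrite modnDr modn_small //; lia.
exact: (map_f (crossing_rel D) Hc).
Qed.


Lemma sizeA n : size (A_diag n) = n.*2.+2.
Proof. rewrite /A_diag /= size_cat /= !size_map size_rev size_iota; lia. Qed.

Lemma nthA0 n : nth e0 (A_diag n) 0 = (0%N, false, true).
Proof. by []. Qed.

Lemma nthA1 n j : 1 <= j <= n -> nth e0 (A_diag n) j = (j, ~~ odd (n - j), true).
Proof.
move=> H; case: j H => [|j] // H; rewrite /A_diag /= nth_cat size_map size_iota.
have -> : j < n by lia.
rewrite (nth_map 0%N); last by rewrite size_iota; lia.
by rewrite nth_iota; last lia.
Qed.

Lemma nthAmid n : nth e0 (A_diag n) n.+1 = (0%N, true, false).
Proof. by rewrite /A_diag /= nth_cat size_map size_iota ltnn subnn. Qed.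

Lemma nthA2 n j : 1 <= j <= n ->
  nth e0 (A_diag n) (n.*2.+2 - j) = (j, odd (n - j), false).
Proof.
move=> H; have -> : n.*2.+2 - j = (n.*2.+1 - j).+1 by lia.
rewrite /A_diag /= nth_cat size_map size_iota.
have -> : (n.*2.+1 - j < n) = false by apply/negbTE; lia.
have -> : n.*2.+1 - j - n = (n - j).+1 by lia.
rewrite /= (nth_map 0%N); last by rewrite size_rev size_iota; lia.
rewrite nth_rev; last by rewrite size_iota; lia.
rewrite size_iota nth_iota; last lia.
by have -> : 1 + (n - (n - j).+1) = j by lia.
Qed.

Lemma arrow_other n j i : 1 <= j <= n -> i < n.*2.+2 -> i != j -> i != n.*2.+2 - j ->
  ep_arrow (nth e0 (A_diag n) i) != j.
Proof.
move=> Hj Hi H1 H2.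
case: (posnP i) => [->|Hi0]; first by rewrite nthA0 /ep_arrow /=; lia.
case: (leqP i n) => Hin.
  by rewrite nthA1 /ep_arrow /=; lia.
case: (eqVneq i n.+1) => [->|Hm]; first by rewrite nthAmid /ep_arrow /=; lia.
have Hk : 1 <= n.*2.+2 - i <= n by lia.
have := nthA2 Hk; have -> : n.*2.+2 - (n.*2.+2 - i) = i by lia.
move=> ->; rewrite /ep_arrow /=; lia.
Qed.

Lemma tail_head n j : 1 <= j <= n -> ~~ odd (n - j) ->
  tail_pos (A_diag n) j = n.*2.+2 - j.
Proof.
move=> Hj Ho; apply: (@find_eq _ _ e0).
- rewrite sizeA; lia.
- by rewrite nthA2 // /ep_arrow /ep_head /= eqxx (negbTE Ho).
- move=> i Hi; cbv beta; case: (eqVneq i j) => [->|Hij].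
    by rewrite nthA1 // /ep_head /= Ho andbF.
  by rewrite (negbTE (arrow_other Hj _ Hij _)) //; lia.
Qed.

Lemma tail_nonhead n j : 1 <= j <= n -> odd (n - j) ->
  tail_pos (A_diag n) j = j.
Proof.
move=> Hj Ho; apply: (@find_eq _ _ e0).
- rewrite sizeA; lia.
- by rewrite nthA1 // /ep_arrow /ep_head /= eqxx Ho.
- move=> i Hi; cbv beta; rewrite (negbTE (arrow_other Hj _ _ _)) //; lia.
Qed.


Lemma hdA1 n j : 1 <= j <= n -> hd (A_diag n) j = ~~ odd (n - j).
Proof. by move=> H; rewrite /hd nthA1. Qed.

Lemma hdA2 n j : 1 <= j <= n -> hd (A_diag n) (n.*2.+2 - j) = odd (n - j).
Proof. by move=> H; rewrite /hd nthA2. Qed.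

Lemma arrA1 n j : 1 <= j <= n -> ep_arrow (nth e0 (A_diag n) j) = j.
Proof. by move=> H; rewrite nthA1. Qed.

Lemma arrA2 n j : 1 <= j <= n -> ep_arrow (nth e0 (A_diag n) (n.*2.+2 - j)) = j.
Proof. by move=> H; rewrite nthA2. Qed.

Lemma mainA n (S : nat -> Prop) :
 (forall a b c e, (a,b,c,e) \in crossing_rels (A_diag n) -> S a -> S b -> S c) ->
 (forall a b c e, (a,b,c,e) \in crossing_rels (A_diag n) -> S a -> S c -> S b) ->
 S (last 0 (heads (A_diag n))) ->
 forall p, p <= n.*2.+1 -> S (arc_of (A_diag n) p).
Proof.
move=> h1 h2 hL.
have Hsz := sizeA n.
suff H : forall m, m <= n -> S (arc_of (A_diag n) m) /\ S (arc_of (A_diag n) (n.*2.+1 - m)).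
  move=> p Hp; case: (leqP p n) => Hpn; first by case: (H p Hpn).
  have [_ ] := H (n.*2.+1 - p) ltac:(lia).
  by have -> : n.*2.+1 - (n.*2.+1 - p) = p by lia.
elim=> [_|m IH Hm].
  rewrite subn0 arc_zero ?Hsz //; split => //.
  by have := @arc_last (A_diag n); rewrite Hsz /= => ->.
have [IH1 IH2] := IH ltac:(lia).
have Hj : 1 <= m.+1 <= n by lia.
have Hs2 : n.*2.+2 - m.+1 = n.*2.+1 - m by lia.
have Hs3 : n.*2.+1 - m.+1 = (n.*2.+1 - m).-1 by lia.
case: (boolP (odd (n - m.+1))) => Ho.
-
  have Hnh : ~~ hd (A_diag n) m.+1 by rewrite hdA1 // Ho.
  have Ha : arc_of (A_diag n) m.+1 = arc_of (A_diag n) m.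
    by rewrite arc_nonhead // Hsz; lia.
  rewrite Ha; split => //.
  have Hc : hd (A_diag n) (n.*2.+1 - m) by rewrite -Hs2 hdA2.
  have Hcin : (n.*2.+1 - m) \in heads (A_diag n).
    by rewrite mem_heads Hc Hsz andbT; lia.
  have := rel_in Hcin ltac:(lia).
  rewrite -{1 2}Hs2 arrA2 // tail_nonhead // Ha -Hs3 => Hr.
  apply: (h2 _ _ _ _ Hr) => //.
  by rewrite -(@arc_head (A_diag n) (n.*2.+1 - m)) // Hsz; lia.
-
  have Hh : hd (A_diag n) m.+1 by rewrite hdA1.
  have Hcin : m.+1 \in heads (A_diag n).
    by rewrite mem_heads Hh Hsz andbT; lia.
  have := rel_in Hcin isT.
  rewrite arrA1 // tail_head // Hs2 /= => Hr.
  split.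
    rewrite arc_head ?Hsz //; last lia.
    exact: (h1 _ _ _ _ Hr).
  have Hnh : ~~ hd (A_diag n) (n.*2.+1 - m) by rewrite -Hs2 hdA2.
  rewrite Hs3 -arc_nonhead // Hsz; lia.
Qed.


Lemma geq_ctx rels u v w w' : geq rels w w' -> geq rels (u ++ w ++ v) (u ++ w' ++ v).
Proof.
elim => {w w'}.
- by move=> w; apply: geq_refl.
- by move=> w w' _ IH; apply: geq_sym.
- by move=> w1 w2 w3 _ IH1 _ IH2; apply: geq_trans IH2.
- move=> u0 v0 x b.
  have := geq_free rels (u ++ u0) (v0 ++ v) x b; by rewrite -!catA.
- move=> u0 v0 r Hr.
  have := geq_relator (u ++ u0) (v0 ++ v) Hr; by rewrite -!catA.
Qed.

Definition gsum (w : seq letter) : int :=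
  foldr (fun l z => ((if l.2 then 1 else -1) + z)%R) 0%R w.

Lemma gsum_cat u v : gsum (u ++ v) = (gsum u + gsum v)%R.
Proof. elim: u => [|l u IH] /=; first by rewrite add0r. by rewrite IH addrA. Qed.

Lemma gsum_geq rels w w' : geq rels w w' -> gsum w = gsum w'.
Proof.
elim => {w w'} //.
- by move=> w1 w2 w3 _ -> _ ->.
- move=> u v x b; rewrite !gsum_cat /=; case: b => /=; congr (_ + _)%R;
  by rewrite addrA ?subrr ?(addrC (-1)%R) ?subrr add0r.
- move=> u v [[[a b] c] e] _; rewrite !gsum_cat /=; case: e => /=; congr (_ + _)%R;
  by rewrite !addrA; lia.
Qed.

Definition canw (L : nat) (z : int) : seq letter :=
  match z with Posz k => nseq k (L, true) | Negz k => nseq k.+1 (L, false) end.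

Lemma gsum_canw L z : gsum (canw L z) = z.
Proof.
case: z => k /=.
  by elim: k => [|k IH] //=; rewrite IH; lia.
rewrite NegzE; elim: k => [|k IH] //=; rewrite IH; lia.
Qed.

Lemma can_step rels L b z :
  geq rels ((L, b) :: canw L z) (canw L ((if b then 1 else -1) + z)%R).
Proof.
case: b; case: z => k.
- have -> : (1 + Posz k = Posz k.+1)%R by lia.
  exact: geq_refl.
- have -> : canw L (1 + Negz k)%R = nseq k (L, false).
    case: k => [|k]; first by [].
    by rewrite (_ : (1 + Negz k.+1 = Negz k)%R) //; rewrite !NegzE; lia.
  exact: (geq_free rels [::] (nseq k (L,false)) L true).
- case: k => [|k].
    have -> : (-1 + Posz 0 = Negz 0)%R by rewrite NegzE; lia.
    exact: geq_refl.
  have -> : (-1 + Posz k.+1 = Posz k)%R by lia.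
  exact: (geq_free rels [::] (nseq k (L,true)) L false).
- have -> : (-1 + Negz k = Negz k.+1)%R by rewrite !NegzE; lia.
  exact: geq_refl.
Qed.

Lemma neg_letter rels p L :
  geq rels [:: (p, true)] [:: (L, true)] -> geq rels [:: (p, false)] [:: (L, false)].
Proof.
move=> H.
apply: geq_trans (geq_sym (geq_free rels [::(p,false)] [::] L true)) _.
have := geq_ctx [::(p,false)] [::(L,false)] (geq_sym H) => /= H2.
apply: geq_trans H2 _.
exact: (geq_free rels [::] [::(L,false)] p false).
Qed.

Lemma NF rels L (S : pred nat) :
  (forall p, S p -> geq rels [:: (p, true)] [:: (L, true)]) ->
  forall w, all (fun l : letter => S l.1) w -> geq rels w (canw L (gsum w)).
Proof.
move=> HS; elim => [|[p b] w IH] /=; first by move=> _; exact: (geq_refl rels [::]).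
move=> /andP [Hp Hw].
have H1 : geq rels [:: (p, b)] [:: (L, b)].
  by case: b; [apply: HS | apply: neg_letter; apply: HS].
have H2 := geq_ctx [::] w H1; rewrite /= in H2.
apply: (geq_trans H2).
have H3 := geq_ctx [::(L,b)] [::] (IH Hw); rewrite /= !cats0 in H3.
apply: (geq_trans H3).
exact: can_step.
Qed.


Lemma Lin n : last 0 (heads (A_diag n)) \in heads (A_diag n).
Proof.
have : n.+1 \in heads (A_diag n).
  by rewrite mem_heads /hd nthAmid sizeA andbT; lia.
case: (heads (A_diag n)) => [|x s] //= _; exact: mem_last.
Qed.

Lemma allheads n (S : nat -> Prop) :
 (forall a b c e, (a,b,c,e) \in crossing_rels (A_diag n) -> S a -> S b -> S c) ->
 (forall a b c e, (a,b,c,e) \in crossing_rels (A_diag n) -> S a -> S c -> S b) ->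
 S (last 0 (heads (A_diag n))) ->
 forall p, p \in heads (A_diag n) -> S p.
Proof.
move=> h1 h2 hL p; rewrite mem_heads sizeA => /andP [Hp Hh].
rewrite -(@arc_head (A_diag n) p) ?sizeA //.
apply: mainA => //; lia.
Qed.

Lemma quandle_all n p : p \in heads (A_diag n) ->
  knot_qeq (A_diag n) (qvar p) (qvar (last 0 (heads (A_diag n)))).
Proof.
set L := last 0 _.
move: p; apply: (@allheads n (fun p => knot_qeq (A_diag n) (qvar p) (qvar L))).
- move=> a b c e Hr Ha Hb.
  apply: qeq_trans (qeq_rel Hr) _.
  case: e {Hr}.
    apply: qeq_trans (qeq_R Hb Ha) _; exact: qeq_idR.
  apply: qeq_trans (qeq_L Hb Ha) _; exact: qeq_idL.
- move=> a b c e Hr Ha Hc.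
  case: e Hr => Hr.
    apply: qeq_trans (qeq_sym (qeq_RL _ (qvar b) (qvar a))) _.
    apply: qeq_trans (qeq_L (qeq_sym (qeq_rel Hr)) (qeq_refl _ _)) _.
    apply: qeq_trans (qeq_L Hc Ha) _; exact: qeq_idL.
  apply: qeq_trans (qeq_sym (qeq_LR _ (qvar b) (qvar a))) _.
  apply: qeq_trans (qeq_R (qeq_sym (qeq_rel Hr)) (qeq_refl _ _)) _.
  apply: qeq_trans (qeq_R Hc Ha) _; exact: qeq_idR.
- exact: qeq_refl.
Qed.

Lemma group_all n p : p \in heads (A_diag n) ->
  knot_geq (A_diag n) [:: (p, true)] [:: (last 0 (heads (A_diag n)), true)].
Proof.
rewrite /knot_geq; set L := last 0 _; set rels := crossing_rels _.
move: p; apply: (@allheads n (fun p => geq rels [:: (p, true)] [:: (L, true)])).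
- move=> a b c e Hr Ha Hb.
  have H1 := geq_sym (geq_relator [:: (c, true)] [::] Hr); rewrite /= in H1.
  apply: (geq_trans H1).
  have H2 := geq_free rels [::] [:: (a, e); (b, true); (a, ~~ e)] c true.
  rewrite /= in H2; apply: (geq_trans H2).
  have H3 := @NF rels L (fun p => (p == a) || (p == b)).
  have H4 := H3 _ [:: (a, e); (b, true); (a, ~~ e)].
  have E : forall e', gsum [:: (a, e'); (b, true); (a, ~~ e')] = 1%R by case => /=; lia.
  rewrite E in H4; apply: H4; last by rewrite /= !eqxx !orbT.
  by move=> q /orP [] /eqP ->.
- move=> a b c e Hr Ha Hc.
  have E : forall e', gsum [:: (a, ~~ e'); (c, true); (a, e')] = 1%R by case => /=; lia.
  have H4 := @NF rels L (fun p => (p == a) || (p == c)) _ [:: (a, ~~ e); (c, true); (a, e)].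
  rewrite E in H4.
  have H5 : geq rels [:: (a, ~~ e); (c, true); (a, e)] (canw L 1).
    apply: H4; last by rewrite /= !eqxx !orbT.
    by move=> q /orP [] /eqP ->.
  have H6 := geq_relator [:: (a, ~~ e); (c, true)] [:: (a, e)] Hr.
  have H7 := geq_free rels [:: (a, ~~ e)] [:: (a, e); (b, true); (a, ~~ e); (a, e)] c true.
  rewrite /= in H6 H7.
  case: e Hr H4 H5 H6 H7 => Hr H4 H5 H6 H7 /=.
  + have H8 := geq_free rels [:: (b, true)] [::] a false.
    have H9 := geq_free rels [::] [:: (b, true); (a, false); (a, true)] a false.
    rewrite /= in H8 H9.
    apply: (geq_trans (geq_sym H8)); apply: (geq_trans (geq_sym H9)).
    apply: (geq_trans (geq_sym H7)); apply: (geq_trans H6); exact: H5.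
  + have H8 := geq_free rels [:: (b, true)] [::] a true.
    have H9 := geq_free rels [::] [:: (b, true); (a, true); (a, false)] a true.
    rewrite /= in H8 H9.
    apply: (geq_trans (geq_sym H8)); apply: (geq_trans (geq_sym H9)).
    apply: (geq_trans (geq_sym H7)); apply: (geq_trans H6); exact: H5.
- exact: geq_refl.
Qed.


Theorem theorem10 (n : nat) :
  [/\ (forall p q, p \in heads (A_diag n) -> q \in heads (A_diag n) ->
         knot_qeq (A_diag n) (qvar p) (qvar q)),
      (exists2 x, x \in heads (A_diag n) &
         forall t, qterm_over (fun p => p \in heads (A_diag n)) t ->
                   knot_qeq (A_diag n) t (qvar x)) &
      group_infinite_cyclic (A_diag n)].
Proof.
set L := last 0 (heads (A_diag n)).
split.
- move=> p q Hp Hq.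
  exact: qeq_trans (quandle_all Hp) (qeq_sym (quandle_all Hq)).
- exists L; first exact: Lin.
  elim=> [p|a IHa b IHb|a IHa b IHb] /=.
  + exact: quandle_all.
  + move=> /andP [Ha Hb].
    exact: qeq_trans (qeq_R (IHa Ha) (IHb Hb)) (qeq_idR _ _).
  + move=> /andP [Ha Hb].
    exact: qeq_trans (qeq_L (IHa Ha) (IHb Hb)) (qeq_idL _ _).
- exists gsum; split.
  + by move=> u v _ _; exact: gsum_cat.
  + move=> u v Hu Hv; split; first exact: gsum_geq.
    move=> E.
    have HS : forall p, (fun p => p \in heads (A_diag n)) p ->
      geq (crossing_rels (A_diag n)) [:: (p, true)] [:: (L, true)].
      by move=> p Hp; exact: group_all.
    have H1 := NF HS Hu; have H2 := NF HS Hv.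
    rewrite E in H1.
    exact: geq_trans H1 (geq_sym H2).
  + move=> z; exists (canw L z); last exact: gsum_canw.
    by case: z => k; rewrite /canw all_nseq /= Lin ?orbT.
Qed.
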